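(* Let $\varphi\in\mathcal{A}$ be w.h.i.s. Then the algebra of Casimirs of $(\mathcal{A},\{\cdot,\cdot\}_\varphi)$ is $H^0(\mathcal{A},\varphi)=\mathrm{Cas}(\mathcal{A},\varphi)=\{f\in\mathcal{A}\mid \vec\nabla f\times\vec\nabla\varphi=\vec 0\}=\bigoplus_{i\in\mathbf{N}}\mathbf{F}\varphi^i=\mathbf{F}[\varphi].$
   Context: $\mathbf{F}$ is a field of characteristic zero and $\mathcal{A}=\mathbf{F}[x,y,z]$. Elements of $\mathcal{A}^3$ are treated as vector fields: $\vec f\cdot\vec g$, $\vec f\times\vec g$ are the usual inner and cross products, $\vec\nabla f=(\partial f/\partial x,\partial f/\partial y,\partial f/\partial z)$, $\vec\nabla\times$ is the curl and $\mathrm{Div}$ the divergence. Fix positive integers $\varpi_1,\varpi_2,\varpi_3$ without common divisor $>1$ (weights of $x,y,z$). A nonzero polynomial is weight homogeneous of degree $d$ if it is an $\mathbf{F}$-linear combination of monomials $x^ay^bz^c$ with $a\varpi_1+b\varpi_2+c\varpi_3=d$; write $\varpi(f)=d$. $\varphi\in\mathcal{A}$ is w.h.i.s. if it is weight homogeneous and $\mathcal{A}_{sing}:=\mathcal{A}/\langle\partial_x\varphi,\partial_y\varphi,\partial_z\varphi\rangle$ is a nonzero finite-dimensional $\mathbf{F}$-vector space. The Poisson bracket $\{\cdot,\cdot\}_\varphi$ on $\mathcal{A}$ is the biderivation determined by $\{x,y\}_\varphi=\partial\varphi/\partial z$, $\{y,z\}_\varphi=\partial\varphi/\partial x$, $\{z,x\}_\varphi=\partial\varphi/\partial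 y$; its Casimirs are the $f$ with $\{f,\cdot\}_\varphi=0$, i.e. $\vec\nabla f\times\vec\nabla\varphi=\vec 0$. *)

(* Defs.v *)
From HB Require Import structures.
From mathcomp Require Import all_boot all_order all_algebra.
From mathcomp Require Import mpoly.
Set Implicit Arguments. Unset Strict Implicit. Unset Printing Implicit Defensive.
Import Order.TTheory GRing.Theory.
Local Open Scope ring_scope.

Section Defs.
Variable F : fieldType.
Notation A := {mpoly F[3]}.

Definition vx : 'I_3 := @Ordinal 3 0 isT.
Definition vy : 'I_3 := @Ordinal 3 1 isT.
Definition vz : 'I_3 := @Ordinal 3 2 isT.

Definition dx (f : A) : A := mderiv vx f.
Definition dy (f : A) : A := mderiv vy f.
Definition dz (f : A) : A := mderiv vz f.

Definition mweight (w : 'I_3 -> nat) (m : 'X_{1..3}) : nat :=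
  (\sum_(i < 3) w i * m i)%N.

Definition good_weights (w : 'I_3 -> nat) : Prop :=
  (forall i, 0 < w i)%N /\
  (forall d : nat, d %| w vx -> d %| w vy -> d %| w vz -> d = 1)%N.

Definition weight_homogeneous (w : 'I_3 -> nat) (d : nat) (f : A) : Prop :=
  f != 0 /\ forall m, m \in msupp f -> mweight w m = d.

Definition in_jacobian_ideal (phi g : A) : Prop :=
  exists a b c : A, g = a * dx phi + b * dy phi + c * dz phi.

(* A / <partials> is a finite-dimensional F-vector space: spanned by the
   classes of finitely many polynomials *)
Definition Asing_finite_dim (phi : A) : Prop :=
  exists s : seq A, forall f : A, exists c : nat -> F,
    in_jacobian_ideal phi (f - \sum_(i < size s) c i *: s`_i).

Definition Asing_nonzero (phi : A) : Prop := ~ in_jacobian_ideal phi 1.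

(* weight homogeneous with isolated singularity, for weights w *)
Definition whis (w : 'I_3 -> nat) (phi : A) : Prop :=
  (exists d, weight_homogeneous w d phi) /\
  Asing_finite_dim phi /\ Asing_nonzero phi.

(* Poisson bracket {f,g}_phi: the biderivation with {x,y}=phi_z,
   {y,z}=phi_x, {z,x}=phi_y, i.e. det(grad f, grad g, grad phi) *)
Definition pbracket (phi f g : A) : A :=
    (dx f * dy g - dy f * dx g) * dz phi
  + (dy f * dz g - dz f * dy g) * dx phi
  + (dz f * dx g - dx f * dz g) * dy phi.

Definition casimir (phi f : A) : Prop := forall g : A, pbracket phi f g = 0.

Definition cross_grad_zero (phi f : A) : Prop :=
  [/\ dy f * dz phi - dz f * dy phi = 0,
      dz f * dx phi - dx f * dz phi = 0 &
      dx f * dy phi - dy f * dx phi = 0].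

Definition in_Fphi (phi f : A) : Prop :=
  exists (n : nat) (c : 'I_n -> F), f = \sum_(i < n) c i *: phi ^+ i.

End Defs.

(* Main.v *)
Require Import Defs.
From HB Require Import structures.
From mathcomp Require Import all_boot all_order all_algebra.
From mathcomp Require Import mpoly.
From mathcomp Require Import ring.
From Stdlib Require Import IndefiniteDescription.
Import GRing.Theory.
Local Open Scope ring_scope.
Section Aux.
Variable F : fieldType.
Local Notation A := {mpoly F[3]}.
Variable w : 'I_3 -> nat.

Definition wt (m : 'X_{1..3}) := Defs.mweight w m.
Definition fPhi : {rmorphism F -> {poly A}} := (polyC \o (@mpolyC 3 F)).
Definition hPhi (i : 'I_3) : {poly A} := ('X_i)%:P * 'X^(w i).
Local Notation Phi := (mmap fPhi hPhi).

Lemma PhiX m : Phi 'X_[m] = ('X_[m])%:P * 'X^(wt m).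
Proof.
rewrite mmapX /mmap1 /hPhi.
under eq_bigr => i _ do rewrite exprMn -exprM.
rewrite big_split /= prodrXr.
under eq_bigr => i _ do rewrite -rmorphXn.
by rewrite -rmorph_prod -mpolyXE_id.
Qed.

Lemma Phi_coef p k : (Phi p)`_k = \sum_(m <- msupp p | wt m == k) p@_m *: 'X_[m].
Proof.
rewrite {1}/mmap coef_sum [RHS]big_mkcond /=; apply: eq_bigr => m _.
rewrite -(mmapX _ fPhi) PhiX /fPhi /= mulrA -rmorphM coefMXn.
case: ltngtP => h.
- by [].
- by rewrite coefC subn_eq0 leqNgt h.
- by rewrite h subnn coefC /= mul_mpolyC.
Qed.

Lemma Phi_homog p e : (forall m, m \in msupp p -> wt m = e) -> Phi p = p%:P * 'X^e.
Proof.
move=> H; apply/polyP => k; rewrite Phi_coef coefMXn.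
case: (ltnP k e) => hk.
- rewrite big_seq_cond big1 // => m /andP [/H -> /eqP ek].
  by move: hk; rewrite ek ltnn.
- rewrite coefC subn_eq0; case: (eqVneq k e) => [->|ne].
  + rewrite leqnn [RHS]mpolyE big_seq_cond [RHS]big_seq; apply: eq_bigl => m.
    by case mp: (m \in msupp p); rewrite //= (H _ mp) eqxx.
  + have -> : (k <= e)%N = false by rewrite leq_eqVlt (negbTE ne) ltnNge hk.
    rewrite big_seq_cond big1 // => m /andP [/H -> /eqP ek].
    by move: ne; rewrite ek eqxx.
Qed.

Lemma wtD m1 m2 : wt (m1 + m2)%MM = (wt m1 + wt m2)%N.
Proof.
by rewrite /wt /Defs.mweight -big_split /=; apply: eq_bigr => i _; rewrite mnmDE mulnDr.
Qed.

Lemma wtU i : wt U_(i)%MM = w i.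
Proof.
rewrite /wt /Defs.mweight (bigD1 i) //= mnm1E eqxx muln1 big1 ?addn0 // => j ji.
by rewrite mnm1E eq_sym (negbTE ji) muln0.
Qed.

Lemma wt_deriv (p : A) d i : (forall m, m \in msupp p -> wt m = d) ->
  forall m, m \in msupp (mderiv i p) -> (wt m + w i)%N = d.
Proof.
move=> H m; rewrite mcoeff_msupp mcoeff_deriv => hm.
rewrite -wtU -wtD; apply: H; rewrite mcoeff_msupp.
by apply: contraNneq hm => ->; rewrite mul0rn.
Qed.

Lemma coefPh (P : {poly A}) (c : A) e k :
  (P * (c%:P * 'X^e))`_k = (if (k < e)%N then 0 else P`_(k - e)) * c.
Proof. by rewrite mulrA coefMXn; case: ifP; rewrite ?mul0r // coefMC. Qed.

Variable phi : A.

Local Notation J := (in_jacobian_ideal phi).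

Lemma J_add a b : J a -> J b -> J (a + b).
Proof.
move=> [a1 [a2 [a3 ->]]] [b1 [b2 [b3 ->]]].
exists (a1 + b1), (a2 + b2), (a3 + b3); ring.
Qed.

Lemma J_mul c b : J b -> J (c * b).
Proof.
move=> [b1 [b2 [b3 ->]]]; exists (c * b1), (c * b2), (c * b3); ring.
Qed.

Lemma J_0 : J 0.
Proof. by exists 0, 0, 0; ring. Qed.

Lemma J_sum (I : Type) (r : seq I) (G : I -> A) :
  (forall i, J (G i)) -> J (\sum_(i <- r) G i).
Proof.
move=> H; elim: r => [|x r IH]; first by rewrite big_nil; exact: J_0.
by rewrite big_cons; apply: J_add.
Qed.

Lemma Phi_J d : (forall m, m \in msupp phi -> wt m = d) ->
  forall g, J g -> forall k, J ((Phi g)`_k).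
Proof.
move=> H g [a [b [c ->]]] k.
have hP i : Phi (mderiv i phi) = (mderiv i phi)%:P * 'X^(d - w i).
  apply: Phi_homog => m hm; by rewrite -(@wt_deriv phi d i H m hm) addnK.
rewrite !rmorphD !rmorphM /= /dx /dy /dz !hP !coefD !coefPh.
by apply: J_add; [apply: J_add|]; apply: J_mul; [exists 1, 0, 0|exists 0, 1, 0|exists 0, 0, 1]; ring.
Qed.

Lemma Phi_extract_gen (q : A) e n (u : 'I_n -> F) (k0 : 'I_n) : (0 < e)%N ->
  Phi q = q%:P * 'X^e ->
  (Phi (\sum_(k < n) u k *: q ^+ k))`_(e * k0) = u k0 *: q ^+ k0.
Proof.
move=> epos hq; rewrite rmorph_sum coef_sum (bigD1 k0) //= big1 ?addr0.
- rewrite mmapZ rmorphXn /= hq exprMn -exprM /fPhi /=.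
  by rewrite mulrA -rmorphXn -rmorphM coefCM coefXn eqxx mulr1 mul_mpolyC.
- move=> k kk0; rewrite mmapZ rmorphXn /= hq exprMn -exprM /fPhi /=.
  rewrite mulrA -rmorphXn -rmorphM coefCM coefXn eqn_pmul2l //.
  by rewrite eq_sym val_eqE (negbTE kk0) mulr0.
Qed.

Lemma Phi_extract i n (u : 'I_n -> F) (k0 : 'I_n) : (0 < w i)%N ->
  (Phi (\sum_(k < n) u k *: 'X_i ^+ k))`_(w i * k0) = u k0 *: 'X_i ^+ k0.
Proof. by move=> wpos; apply: Phi_extract_gen => //; rewrite mmapX mmap1U. Qed.

Lemma J_scale (c : F) b : J b -> J (c *: b).
Proof. by move=> Jb; rewrite -mul_mpolyC; apply: J_mul. Qed.

Lemma fin_dep (i : 'I_3) : Asing_finite_dim phi ->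
  exists n (u : 'I_n -> F) (k0 : 'I_n),
    u k0 != 0 /\ J (\sum_(k < n) u k *: 'X_i ^+ k).
Proof.
move=> [s Hs]; set N := size s.
pose g (k : 'I_N.+1) : nat -> F :=
  proj1_sig (constructive_indefinite_description _ (Hs ('X_i ^+ k))).
have Hg (k : 'I_N.+1) : J ('X_i ^+ k - \sum_(j < N) g k j *: s`_j).
  exact: (proj2_sig (constructive_indefinite_description _ (Hs ('X_i ^+ k)))).
pose M : 'M[F]_(N.+1, N) := \matrix_(k, j) g k j.
have : kermx M != 0.
  rewrite kermx_eq0 -row_leq_rank -ltnNge.
  exact: leq_ltn_trans (rank_leq_col M) (ltnSn N).
move=> /eqP Kn0.
have [r Hr] : exists r, row r (kermx M) != 0.
  apply/existsP; rewrite -negb_forall; apply/negP => /forallP H; apply: Kn0.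
  by apply/row_matrixP => r; rewrite (eqP (H r)) row0.
set u := row r (kermx M) in Hr.
have uM : u *m M = 0 by rewrite /u -row_mul mulmx_ker row0.
have [k0 Hk0] : exists k0, u 0 k0 != 0.
  apply/existsP; rewrite -negb_forall; apply/negP => /forallP H; apply: (negP Hr).
  apply/eqP/matrixP => a b; rewrite ord1 [RHS]mxE; exact: (eqP (H b)).
exists N.+1, (fun k => u 0 k), k0; split => //.
have -> : \sum_(k < N.+1) u 0 k *: 'X_i ^+ k =
   \sum_(k < N.+1) u 0 k *: ('X_i ^+ k - \sum_(j < N) g k j *: s`_j).
  under [RHS]eq_bigr => k _ do rewrite scalerBr.
  rewrite sumrB; apply/esym/eqP; rewrite subr_eq addrC -subr_eq subrr eq_sym; apply/eqP.
  under eq_bigr => k _ do rewrite scaler_sumr.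
  rewrite exchange_big /= big1 // => j _.
  under eq_bigr => k _ do rewrite scalerA.
  rewrite -scaler_suml.
  have -> : \sum_(k < N.+1) u 0 k * g k j = (u *m M) 0 j.
    by rewrite mxE; apply: eq_bigr => k _; rewrite /M !mxE.
  by have := congr1 (fun X : 'M_(1, N) => X ord0 j) uM; rewrite /= [RHS]mxE => ->; rewrite scale0r.
by apply: J_sum => k; apply: J_scale.
Qed.

Lemma mono_J d i : (forall m, m \in msupp phi -> wt m = d) -> (0 < w i)%N ->
  Asing_finite_dim phi -> exists N, J ('X_i ^+ N).
Proof.
move=> H wp /(fin_dep i) [n [u [k0 [uk0 Jg]]]].
have := @Phi_J d H _ Jg (w i * k0); rewrite Phi_extract // => J1.
exists k0; have := @J_scale (u k0)^-1 _ J1.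
by rewrite scalerA mulVf // scale1r.
Qed.

Lemma wt_eq0 m : (forall i, 0 < w i)%N -> wt m = 0%N -> m = 0%MM.
Proof.
move=> wp h; apply/mnmP => j; rewrite mnm0E.
have : (w j * m j <= wt m)%N.
  by rewrite /wt /Defs.mweight (bigD1 j) //= leq_addr.
rewrite h leqn0 muln_eq0 => /orP [/eqP wj|/eqP //].
by move: (wp j); rewrite wj.
Qed.

End Aux.

Section Aux2.
Variable F : fieldType.
Local Notation A := {mpoly F[3]}.

Lemma xderiv (p : A) i m : ('X_i * mderiv i p)@_m = p@_m *+ m i.
Proof.
rewrite mulrC; case: (eqVneq (m i) 0%N) => [mi0|mi0].
- rewrite mi0 mulr0n; apply/eqP; rewrite mcoeff_eq0.
  rewrite (perm_mem (msuppMX _ _)); apply/mapP => [[m' _ em]].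
  by move: mi0; rewrite em mnmDE mnm1E eqxx.
- have le : (U_(i) <= m)%MM by rewrite lep1mP.
  rewrite -{1}(submK le) addmC mcoeffMX mcoeff_deriv submK //.
  by rewrite mnmBE mnm1E eqxx subn1 prednK // lt0n.
Qed.

Lemma sum3 (G : 'I_3 -> nat) : (\sum_(i < 3) G i = G vx + G vy + G vz)%N.
Proof.
rewrite !big_ord_recl big_ord0 addn0 addnA.
by congr (G _ + G _ + G _)%N; apply: val_inj.
Qed.

Lemma euler (w : 'I_3 -> nat) (p : A) d :
  (forall m, m \in msupp p -> Defs.mweight w m = d) ->
  (w vx)%:R *: ('X_vx * dx p) + (w vy)%:R *: ('X_vy * dy p) + (w vz)%:R *: ('X_vz * dz p)
  = d%:R *: p.
Proof.
move=> H; apply/mpolyP => m.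
rewrite !mcoeffD !mcoeffZ /dx /dy /dz !xderiv.
have [pm0|pm0] := eqVneq p@_m 0; first by rewrite pm0 !mul0rn !mulr0 !addr0.
have := H m; rewrite mcoeff_msupp => /(_ pm0) <-.
rewrite /Defs.mweight sum3 !natrD !natrM -!(mulr_natr (p@_m)); ring.
Qed.

Lemma mono_div (a b : A) (i j : 'I_3) N M : i != j ->
  a * 'X_j ^+ M = b * 'X_i ^+ N -> exists a', a = a' * 'X_i ^+ N.
Proof.
move=> ij; rewrite !mpolyXn => E.
set mx := (U_(i) *+ N)%MM; set my := (U_(j) *+ M)%MM.
have le k : k \in msupp a -> (mx <= k)%MM.
  move=> ka.
  have : (my + k)%MM \in msupp (b * 'X_[mx]).
    by rewrite -E mcoeff_msupp mcoeffMX -mcoeff_msupp.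
  rewrite (perm_mem (msuppMX _ _)) => /mapP [m' _ e].
  apply/mnm_lepP => l; rewrite /mx mulmnE mnm1E.
  case: (eqVneq i l) => [<-|_]; last by rewrite mul0n.
  have := congr1 (fun q : 'X_{1..3} => q i) e.
  rewrite !mnmDE /my !mulmnE !mnm1E eqxx eq_sym (negbTE ij) /= mul0n add0n mul1n => ->.
  exact: leq_addr.
exists (\sum_(k <- msupp a) a@_k *: 'X_[k - mx]).
rewrite mulr_suml {1}[a]mpolyE big_seq [RHS]big_seq; apply: eq_bigr => k ka.
by rewrite -scalerAl -mpolyXD submK // le.
Qed.

Lemma deriv_all (p : A) : dx p = 0 -> dy p = 0 -> dz p = 0 -> forall i, mderiv i p = 0.
Proof.
move=> hx hy hz [[|[|[|//]]] hi].
- by rewrite -hx /dx; congr mderiv; apply: val_inj.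
- by rewrite -hy /dy; congr mderiv; apply: val_inj.
- by rewrite -hz /dz; congr mderiv; apply: val_inj.
Qed.

Lemma const_of_deriv (charF0 : [pchar F] =i pred0) (p : A) :
  (forall i, mderiv i p = 0) -> p = (p@_0)%:MP.
Proof.
move=> H; apply/mpolyP => m; rewrite mcoeffC.
case: (eqVneq m 0%MM) => [->|mn0]; first by rewrite mulr1.
rewrite mulr0.
have [i mi] : exists i, m i != 0%N.
  apply/existsP; rewrite -negb_forall; apply: contra mn0 => /forallP h.
  by apply/eqP/mnmP => i; rewrite mnm0E; apply/eqP.
have le : (U_(i) <= m)%MM by rewrite lep1mP.
have := congr1 (mcoeff (m - U_(i))%MM) (H i).
rewrite mcoeff_deriv submK // mcoeff0 mnmBE mnm1E eqxx subn1 prednK ?lt0n //.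
move/eqP; rewrite -mulr_natr mulf_eq0 => /orP [/eqP //|].
by move/(pcharf0P _).1: charF0 => ->; rewrite (negbTE mi).
Qed.

Lemma msize_deriv (p : A) i : p != 0 -> (msize (mderiv i p) < msize p)%N.
Proof.
move=> pn0.
have hp : (0 < msize p)%N by rewrite lt0n msize_poly_eq0.
rewrite -(prednK hp) ltnS msizeE; apply/bigmax_leqP_seq => m hm _.
have : (m + U_(i))%MM \in msupp p.
  move: hm; rewrite !mcoeff_msupp mcoeff_deriv; apply: contraNneq => ->.
  by rewrite mul0rn.
move/msize_mdeg_lt; rewrite mdegD mdeg1 addn1 => h.
by rewrite -ltnS prednK.
Qed.

Lemma deriv_pow (q : A) i k :
  mderiv i (q ^+ k.+1) = (q ^+ k * mderiv i q) *+ k.+1.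
Proof.
elim: k => [|k IH]; first by rewrite expr1 expr0 mul1r.
by rewrite exprS mderivM IH exprS; ring.
Qed.

Lemma dX (i j : 'I_3) : mderiv j ('X_i : A) = (i == j)%:R.
Proof.
rewrite mderivX mnm1E; case: (eqVneq i j) => [->|_]; last by rewrite scale0r.
have -> : (U_(j) - U_(j))%MM = 0%MM by apply/mnmP => l; rewrite mnmBE subnn mnm0E.
by rewrite mpolyX0 scale1r.
Qed.

Lemma deriv_poly (q : A) j n (c : 'I_n -> F) :
  mderiv j (\sum_(i < n) c i *: q ^+ i) =
  (\sum_(i < n) c i *: (q ^+ i.-1 *+ i)) * mderiv j q.
Proof.
rewrite linear_sum mulr_suml; apply: eq_bigr => i _ /=.
rewrite linearZ -scalerAl /=; congr (_ *: _).
case: (nat_of_ord i) => [|k]; first by rewrite expr0 mulr0n mul0r -[1]/(1%:MP) mderivC.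
by rewrite deriv_pow /= mulrnAl.
Qed.

End Aux2.
Section Main.
Variable F : fieldType.
Local Notation A := {mpoly F[3]}.
Variable w : 'I_3 -> nat.
Variable phi : A.
Variable d : nat.
Hypothesis Hd : forall m, m \in msupp phi -> Defs.mweight w m = d.
Hypothesis phin0 : phi != 0.
Hypothesis dn0 : (d%:R : F) != 0.
Variables Nx Ny : nat.
Hypothesis HJx : in_jacobian_ideal phi ('X_vx ^+ Nx).
Hypothesis HJy : in_jacobian_ideal phi ('X_vy ^+ Ny).

Lemma core f : cross_grad_zero phi f ->
  exists h, [/\ dx f = h * dx phi, dy f = h * dy phi & dz f = h * dz phi].
Proof.
move=> [c1 c2 c3].
pose E := (w vx)%:R *: ('X_vx * dx f) + (w vy)%:R *: ('X_vy * dy f)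
          + (w vz)%:R *: ('X_vz * dz f).
have Eu := @euler F w phi d Hd.
set Ep := (_ + _ + _) in Eu.
have Hs : forall r : F, forall s : A, r *: s = r%:MP * s by move=> r s; rewrite mul_mpolyC.
have Ex : E * dx phi = dx f * Ep.
  rewrite /E /Ep !Hs.
  apply/eqP; rewrite -subr_eq0; apply/eqP.
  transitivity ((w vy)%:R%:MP * 'X_vy * (-(dx f * dy phi - dy f * dx phi))
               + (w vz)%:R%:MP * 'X_vz * (dz f * dx phi - dx f * dz phi)); first by ring.
  by rewrite c2 c3 oppr0 !mulr0 addr0.
have Ey : E * dy phi = dy f * Ep.
  rewrite /E /Ep !Hs.
  apply/eqP; rewrite -subr_eq0; apply/eqP.
  transitivity ((w vx)%:R%:MP * 'X_vx * (dx f * dy phi - dy f * dx phi)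
               + (w vz)%:R%:MP * 'X_vz * (-(dy f * dz phi - dz f * dy phi))); first by ring.
  by rewrite c1 c3 oppr0 !mulr0 addr0.
have Ez : E * dz phi = dz f * Ep.
  rewrite /E /Ep !Hs.
  apply/eqP; rewrite -subr_eq0; apply/eqP.
  transitivity ((w vx)%:R%:MP * 'X_vx * (-(dz f * dx phi - dx f * dz phi))
               + (w vy)%:R%:MP * 'X_vy * (dy f * dz phi - dz f * dy phi)); first by ring.
  by rewrite c1 c2 oppr0 !mulr0 addr0.
have HJ : forall M, in_jacobian_ideal phi M -> exists B, E * M = phi * B.
  move=> M [a [b [c ->]]].
  exists ((d%:R : F)%:MP * (a * dx f + b * dy f + c * dz f)).
  transitivity (a * (E * dx phi) + b * (E * dy phi) + c * (E * dz phi)); first by ring.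
  by rewrite Ex Ey Ez Eu Hs; ring.
have [A1 hA1] := HJ _ HJx.
have [B1 hB1] := HJ _ HJy.
have e1 : A1 * 'X_vy ^+ Ny = B1 * 'X_vx ^+ Nx.
  apply: (mulfI phin0).
  by rewrite !mulrA -hA1 -hB1 -!mulrA [_ ^+ Nx * _]mulrC.
have [a' ea'] := @mono_div F A1 B1 vx vy Nx Ny isT e1.
have Xn0 : forall i : 'I_3, ('X_i : A) != 0.
  move=> i; apply/eqP => h; have := congr1 (mcoeff U_(i)) h.
  by rewrite mcoeffX eqxx mcoeff0 => /eqP; rewrite oner_eq0.
have eE : E = phi * a'.
  apply: (mulIf (expf_neq0 Nx (Xn0 vx))).
  by rewrite /= hA1 ea' mulrA.
have key : forall fj pj : A, E * pj = fj * Ep -> fj = ((d%:R : F)^-1 *: a') * pj.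
  move=> fj pj; rewrite eE Eu Hs => H.
  have H2 : a' * pj = (d%:R : F)%:MP * fj.
    apply: (mulfI phin0); rewrite mulrA H; ring.
  by rewrite Hs -mulrA H2 mulrA -rmorphM mulVf // rmorph1 mul1r.
by exists ((d%:R : F)^-1 *: a'); split; apply: key.
Qed.

Lemma curl_h (f h : A) (i j : 'I_3) :
  mderiv i f = h * mderiv i phi -> mderiv j f = h * mderiv j phi ->
  mderiv i h * mderiv j phi - mderiv j h * mderiv i phi = 0.
Proof.
move=> hi hj; have := mderiv_comm i j f.
rewrite hi hj !mderivM (mderiv_comm i j phi) => e.
apply/eqP; rewrite subr_eq0; apply/eqP.
by apply: (addIr (h * phi^`M(j)^`M(i))); rewrite [RHS]addrC -e addrC.
Qed.

Lemma cross_h (f h : A) :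
  dx f = h * dx phi -> dy f = h * dy phi -> dz f = h * dz phi ->
  cross_grad_zero phi h.
Proof.
move=> hx hy hz; split.
- exact: (@curl_h f h vy vz hy hz).
- exact: (@curl_h f h vz vx hz hx).
- exact: (@curl_h f h vx vy hx hy).
Qed.

Hypothesis charF0 : [pchar F] =i pred0.

Lemma natF_neq0 k : ((k.+1)%:R : F) != 0.
Proof. by move/(pcharf0P _).1: charF0 => ->. Qed.

Lemma Fphi n : forall f, (msize f < n)%N -> cross_grad_zero phi f -> in_Fphi phi f.
Proof.
elim: n => [//|n IH] f hf cf.
have [dzero|dnz] := boolP [&& dx f == 0, dy f == 0 & dz f == 0].
  case/and3P: dzero => /eqP h1 /eqP h2 /eqP h3.
  exists 1%N, (fun _ => f@_0); rewrite big_ord1 expr0 -mul_mpolyC mulr1.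
  exact: (@const_of_deriv F charF0 f (@deriv_all F f h1 h2 h3)).
have [h [hx hy hz]] := core f cf.
have ch := cross_h f h hx hy hz.
have hlt : (msize h < n)%N.
  rewrite -ltnS; apply: leq_trans hf.
  have gen : forall (i : 'I_3), mderiv i f = h * mderiv i phi -> mderiv i f != 0 ->
      (msize h < msize f)%N.
    move=> i hi nz.
    have fn0 : f != 0 by apply: contraNneq nz => h0; rewrite h0 linear0.
    apply: leq_ltn_trans (@msize_deriv F f i fn0).
    have hn0 : h != 0 by apply: contraNneq nz => h0; rewrite hi h0 mul0r.
    have pn0 : mderiv i phi != 0 by apply: contraNneq nz => h0; rewrite hi h0 mulr0.
    rewrite hi msizeM //.
    have : (0 < msize (mderiv i phi))%N by rewrite lt0n msize_poly_eq0.
    by case: (msize (mderiv i phi)) => // k _; rewrite addnS /= leq_addr.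
  move: dnz; rewrite !negb_and => /orP [|/orP []].
  - exact: (gen vx hx).
  - exact: (gen vy hy).
  - exact: (gen vz hz).
have [k [c hc]] := IH h hlt ch.
pose c' (i : 'I_k.+1) : F := if unlift ord0 i is Some j then c j / (j.+1)%:R else 0.
pose G := \sum_(i < k.+1) c' i *: phi ^+ i.
have dG : forall j, mderiv j G = h * mderiv j phi.
  move=> j; rewrite deriv_poly hc; congr (_ * _).
  rewrite big_ord_recl /c' unlift_none mulr0n scaler0 add0r.
  apply: eq_bigr => i _; rewrite liftK /= -scaler_nat scalerA -mulrA mulVf ?mulr1 //.
  exact: natF_neq0.
have c0 : f - G = ((f - G)@_0)%:MP.
  apply: (@const_of_deriv F charF0); apply: deriv_all; rewrite /dx /dy /dz linearB /= dG.
  - by rewrite -/(dx f) hx subrr.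
  - by rewrite -/(dy f) hy subrr.
  - by rewrite -/(dz f) hz subrr.
exists k.+1, (fun i => c' i + (if i == ord0 then (f - G)@_0 else 0)).
under eq_bigr => i _ do rewrite scalerDl.
rewrite big_split /= -/G big_ord_recl eqxx expr0 big1 ?addr0.
  by rewrite -mul_mpolyC mulr1 -c0 addrC subrK.
by move=> i _; rewrite scale0r.
Qed.

End Main.


Lemma Xn0 (F : fieldType) (i : 'I_3) : ('X_i : {mpoly F[3]}) != 0.
Proof.
apply/eqP => h; have := congr1 (mcoeff U_(i)) h.
by rewrite mcoeffX eqxx mcoeff0 => /eqP; rewrite oner_eq0.
Qed.

Lemma Fphi_cross (F : fieldType) (phi f : {mpoly F[3]}) : in_Fphi phi f -> cross_grad_zero phi f.
Proof.
move=> [n [c ->]]; rewrite /cross_grad_zero /dx /dy /dz !deriv_poly.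
by split; ring.
Qed.

Lemma casimir_cross (F : fieldType) (phi f : {mpoly F[3]}) :
  casimir phi f <-> cross_grad_zero phi f.
Proof.
split.
- move=> H; split.
  + have := H 'X_vx; rewrite /pbracket /dx /dy /dz !dX /= => e.
    by apply/eqP; rewrite -oppr_eq0; apply/eqP; rewrite -e; ring.
  + have := H 'X_vy; rewrite /pbracket /dx /dy /dz !dX /= => e.
    by apply/eqP; rewrite -oppr_eq0; apply/eqP; rewrite -e; ring.
  + have := H 'X_vz; rewrite /pbracket /dx /dy /dz !dX /= => e.
    by apply/eqP; rewrite -oppr_eq0; apply/eqP; rewrite -e; ring.
- move=> [c1 c2 c3] g; rewrite /pbracket.
  transitivity (- (dx g * (dy f * dz phi - dz f * dy phi)
                + dy g * (dz f * dx phi - dx f * dz phi)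
                + dz g * (dx f * dy phi - dy f * dx phi))); first by ring.
  by rewrite c1 c2 c3 !mulr0 !addr0 oppr0.
Qed.

Theorem mainTheorem3 (F : fieldType) (charF0 : [pchar F] =i pred0)
  (w : 'I_3 -> nat) (hw : good_weights w) (phi : {mpoly F[3]})
  (hphi : whis w phi) :
  (forall f : {mpoly F[3]},
     (casimir phi f <-> cross_grad_zero phi f) /\
     (cross_grad_zero phi f <-> in_Fphi phi f)) /\
  (* the sum  \sum_i F phi^i  is direct *)
  (forall (n : nat) (c : 'I_n -> F),
     \sum_(i < n) c i *: phi ^+ i = 0 -> forall i, c i = 0).
Proof.
case: hw => wpos _.
case: hphi => [[d [phin0 Hd]] [hfin _]].
have [Nx HJx] := @mono_J F w phi d vx Hd (wpos vx) hfin.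
have [Ny HJy] := @mono_J F w phi d vy Hd (wpos vy) hfin.
have dpos : (0 < d)%N.
  rewrite lt0n; apply/eqP => d0.
  have dz0 : forall i, mderiv i phi = 0.
    move=> i; apply/eqP; rewrite -msupp_eq0; apply/eqP.
    case E: (msupp _) => [//|m s].
    have : m \in msupp (mderiv i phi) by rewrite E mem_head.
    move/(@wt_deriv F w phi d i Hd)/eqP; rewrite d0 addn_eq0 => /andP [_ /eqP wi].
    by move: (wpos i); rewrite wi.
  case: HJx => [a [b [c]]]; rewrite /dx /dy /dz !dz0 !mulr0 !addr0 => /eqP.
  by rewrite (negbTE (expf_neq0 _ (Xn0 _ vx))).
have dn0 : (d%:R : F) != 0.
  by move/(pcharf0P _).1: charF0 => ->; rewrite -lt0n.
split.
- move=> f; split; first exact: casimir_cross.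
  split; last exact: Fphi_cross.
  exact: (@Fphi F w phi d Hd phin0 dn0 Nx Ny HJx HJy charF0 (msize f).+1 f (ltnSn _)).
- move=> n c hs i.
  have hq := @Phi_homog F w phi d Hd.
  have := @Phi_extract_gen F w phi d n c i dpos hq.
  rewrite hs raddf0 coef0 => /esym /eqP.
  rewrite -mul_mpolyC mulf_eq0 mpolyC_eq0 (negbTE (expf_neq0 _ phin0)) orbF.
  by move/eqP.
Qed.
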